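(* Every $L_1$-embeddable diversity can be isometrically embedded in a measure diversity.
   Context: A diversity on a set $X$ is a function $\delta$ from finite subsets of $X$ to $\mathbb{R}$ with $\delta(A)\ge 0$, $\delta(A)=0$ whenever $|A|\le 1$ (values $0$ on larger sets are allowed), and $\delta(A\cup B)+\delta(B\cup C)\ge\delta(A\cup C)$ for all finite $A,B,C$ with $B\neq\emptyset$. For a measure space $(\Omega,\mathcal{A},\mu)$, the $L_1$ diversity is $(L_1(\Omega,\mu),\delta_1)$ with $\delta_1(F)=\int_\Omega\max\{|f(\omega)-g(\omega)|:f,g\in F\}\,d\mu(\omega)$ for finite $F$. A diversity $(X,\delta)$ is $L_1$-embeddable if there is a map $\phi$ from $X$ into some $L_1$ diversity with $\delta_1(\phi(A))=\delta(A)$ for all finite $A\subseteq X$ (an isometric embedding). Measure diversity: for a measure space $(M,\Sigma,\mu)$, the set is the collection of sets in $\Sigma$ of finite measure and $\delta(\{E_1,\dots,E_k\})=\mu(\bigcup_iE_i\setminus\bigcap_iE_i)$. *)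

(* Defs.v *)
From HB Require Import structures.
From mathcomp Require Import all_boot all_order all_algebra.
From mathcomp Require Import finmap.
From mathcomp Require Import all_classical all_reals all_analysis.
Set Implicit Arguments. Unset Strict Implicit. Unset Printing Implicit Defensive.
Import Order.TTheory GRing.Theory Num.Theory.
Local Open Scope classical_set_scope.
Local Open Scope ring_scope.

Definition is_diversity (R : realType) (X : choiceType) (delta : {fset X} -> R) : Prop :=
  (forall A : {fset X}, 0 <= delta A) /\
  (forall A : {fset X}, (#|` A| <= 1)%N -> delta A = 0) /\
  (forall A B C : {fset X}, B != fset0%fset ->
      delta (A `|` C)%fset <= delta (A `|` B)%fset + delta (B `|` C)%fset).

Definition L1_maxdiff (R : realType) (X : choiceType) (Om : Type)
  (phi : X -> Om -> R) (A : {fset X}) (w : Om) : R :=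
  \big[Num.max/0]_(x <- A) \big[Num.max/0]_(y <- A) `|phi x w - phi y w|.

(* (X, delta) is L1-embeddable: there is a measure space (Om, mu) and a map
   phi : X -> L1(Om, mu) (given by integrable representatives) with
   delta_1(phi(A)) = delta(A) for all finite A. *)
Definition L1_embeddable (R : realType) (X : choiceType) (delta : {fset X} -> R) : Prop :=
  exists (d : measure_display) (Om : measurableType d)
         (mu : {measure set Om -> \bar R}) (phi : X -> Om -> R),
    (forall x, mu.-integrable setT (EFin \o phi x)) /\
    (forall A : {fset X},
        ((delta A)%:E = \int[mu]_(w in setT) (L1_maxdiff phi A w)%:E)%E).

Definition measure_div (d : measure_display) (T : measurableType d) (R : realType)
  (mu : {measure set T -> \bar R}) (X : choiceType) (E : X -> set T) (A : {fset X})
  : \bar R :=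
  mu ((\bigcup_(x in [set x | x \in A]) E x) `\` (\bigcap_(x in [set x | x \in A]) E x)).

Definition measure_div_embeddable (R : realType) (X : choiceType)
  (delta : {fset X} -> R) : Prop :=
  exists (d : measure_display) (T : measurableType d)
         (mu : {measure set T -> \bar R}) (E : X -> set T),
    (forall x, measurable (E x) /\ (mu (E x) < +oo)%E) /\
    (forall A : {fset X}, measure_div mu E A = (delta A)%:E).

(* Main.v *)
Require Import Defs.
From HB Require Import structures.
From mathcomp Require Import all_boot all_order all_algebra.
From mathcomp Require Import finmap.
From mathcomp Require Import all_classical all_reals all_analysis.
From mathcomp Require Import lra measurable_realfun.
Set Implicit Arguments. Unset Strict Implicit. Unset Printing Implicit Defensive.
Import Order.TTheory GRing.Theory Num.Theory.
Local Open Scope classical_set_scope.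
Local Open Scope ring_scope.

Section Helpers.
Context (R : realType).

Definition Sv (v t : R) : bool := ((0 <= t) && (t < v)) || ((v <= t) && (t < 0)).

Lemma Sv_itv v t : Sv v t = (Num.min 0 v <= t < Num.max 0 v).
Proof.
rewrite /Sv; case: (lerP 0 v) => h; case: (lerP 0 t) => ht /=.
- by rewrite andbF orbF.
- by rewrite andbT; apply/negbTE; rewrite -ltNge; lra.
- by rewrite !andbF orbF; apply/negbTE; rewrite -leNgt; lra.
- by [].
Qed.

Lemma Sv_pos v t : 0 <= t -> Sv v t = (t < v).
Proof. by move=> ht; rewrite /Sv ht /= [t < 0]ltNge ht !andbF orbF. Qed.

Lemma Sv_neg v t : t < 0 -> Sv v t = (v <= t).
Proof. by move=> ht; rewrite /Sv ht andbT leNgt ht. Qed.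

Lemma Sv_key (m M t : R) (P : R -> Prop) :
  (exists v, P v /\ Sv v t) -> (exists v, P v /\ ~~ Sv v t) ->
  (forall v, P v -> m <= v <= M) -> m <= t < M.
Proof.
move=> [v [Pv Sv1]] [u [Pu Sv2]] B.
move: (B v Pv) (B u Pu) => /andP[h1 h2] /andP[h3 h4].
case: (lerP 0 t) => ht.
- move: Sv1 Sv2; rewrite !Sv_pos// -leNgt => h5 h6; apply/andP; split; lra.
- move: Sv1 Sv2; rewrite !Sv_neg// -ltNge => h5 h6; apply/andP; split; lra.
Qed.




End Helpers.

Section Main.
Context (R : realType) (X : choiceType).

Lemma seq_argmax (g : X -> R) (s : seq X) : s != [::] ->
  exists2 x, x \in s & forall y, y \in s -> g y <= g x.
Proof.
elim: s => // a s IH _.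
have [->|sn] := eqVneq s [::].
  by exists a; rewrite ?mem_head // => y; rewrite inE => /eqP ->.
have [x xs Hx] := IH sn.
case: (lerP (g a) (g x)) => h.
  exists x; first by rewrite inE xs orbT.
  by move=> y; rewrite inE => /orP[/eqP ->|/Hx].
exists a; first by rewrite mem_head.
move=> y; rewrite inE => /orP[/eqP ->//|/Hx ?]; lra.
Qed.

Lemma maxdiff_eq (g : X -> R) (A : seq X) m M x1 x2 :
  x1 \in A -> x2 \in A -> g x1 = m -> g x2 = M ->
  (forall y, y \in A -> m <= g y <= M) ->
  \big[Num.max/0]_(x <- A) \big[Num.max/0]_(y <- A) `|g x - g y| = M - m.
Proof.
move=> h1 h2 e1 e2 B.
have mM : m <= M by move: (B _ h1) => /andP[]; lra.
apply/le_anti/andP; split.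
- rewrite big_seq; apply: bigmax_le; first lra.
  move=> x xA; rewrite big_seq; apply: bigmax_le; first lra.
  move=> y yA; move: (B _ xA) (B _ yA) => /andP[? ?] /andP[? ?].
  rewrite ler_norml; apply/andP; split; lra.
- apply: (@bigmax_sup_seq _ _ _ _ _ x2) => //.
  apply: (@bigmax_sup_seq _ _ _ _ _ x1) => //.
  rewrite e1 e2; exact: ler_norm.
Qed.
End Main.

Section Meas.
Context (R : realType) (X : choiceType) (d : measure_display) (Om : measurableType d).
Variable phi : X -> Om -> R.
Local Notation lam := (@lebesgue_measure R).
Definition EE (x : X) : set (Om * measurableTypeR R)%type := [set p | Sv (phi x p.1) (p.2 : R)].

Lemma section_D (A : {fset X}) (w : Om) :
  lam (xsection ((\bigcup_(x in [set x | x \in A]) EE x) `\` (\bigcap_(x in [set x | x \in A]) EE x)) w)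
  = (L1_maxdiff phi A w)%:E.
Proof.
have [->|An] := eqVneq A fset0.
  rewrite /L1_maxdiff (_ : (fset0 : seq X) = [::]) // big_nil.
  have -> : [set x | x \in fset0] = set0 :> set X by apply/seteqP; split => x //=.
  by rewrite bigcup_set0 set0D xsection0 measure0.
have sA : (A : seq X) != [::].
  apply: contra An => /eqP sA; apply/eqP/fsetP => x; rewrite in_fset0.
  by rewrite -[x \in A]/(x \in (A : seq X)) sA.
have [x2 x2A H2] := seq_argmax (fun x => phi x w) sA.
have [x1 x1A H1] := seq_argmax (fun x => - phi x w) sA.
set m := phi x1 w; set M := phi x2 w.
have B : forall y, y \in (A : seq X) -> m <= phi y w <= M.
  by move=> y yA; rewrite H2 // andbT -lerN2 H1.
have sec : xsection ((\bigcup_(x in [set x | x \in A]) EE x) `\` (\bigcap_(x in [set x | x \in A]) EE x)) w = [set` `[m, M[%R].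
  apply/seteqP; split => t; rewrite /xsection /= in_itv /= inE.
  - move=> [[y yA Sy] nall].
    have [z /= [zA nSz]] : exists z, z \in A /\ ~~ Sv (phi z w) t.
      apply: contrapT => hn; apply: nall => z zA; apply/negPn/negP => nS.
      by apply: hn; exists z.
    apply: (@Sv_key _ m M t (fun v => exists2 y, y \in A & v = phi y w)).
    + by exists (phi y w); split => //; exists y.
    + by exists (phi z w); split => //; exists z.
    + by move=> v [u uA ->]; exact: B.
  - move=> /andP[h1 h2]; rewrite /m /M in h1 h2; case: (lerP 0 t) => ht.
    + split; first by exists x2 => //=; rewrite /EE /= Sv_pos.
      move=> /(_ x1 x1A); rewrite /EE /= Sv_pos // => h; lra.
    + split; first by exists x1 => //=; rewrite /EE /= Sv_neg.
      move=> /(_ x2 x2A); rewrite /EE /= Sv_neg // => h; lra.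
rewrite sec lebesgue_measure_itv /= /L1_maxdiff.
have mM : m <= M by move: (B _ x1A) => /andP[]; lra.
rewrite (@maxdiff_eq _ _ (fun x => phi x w) A m M x1 x2) //.
case: ltP => h; first by rewrite EFinB.
have -> : M = m by apply/le_anti; rewrite mM -lee_fin h.
by rewrite subrr.
Qed.

Lemma section_E x w : lam (xsection (EE x) w) = (`|phi x w|)%:E.
Proof.
have -> : xsection (EE x) w = [set` `[Num.min 0 (phi x w), Num.max 0 (phi x w)[%R].
  by apply/seteqP; split => t; rewrite /xsection /= in_itv /= inE /EE /= Sv_itv.
rewrite lebesgue_measure_itv /=.
case: (lerP 0 (phi x w)) => h /=.
- case: ltP => h'; first by rewrite -EFinD subr0 ger0_norm.
  have -> : phi x w = 0 by apply/le_anti; rewrite h -lee_fin h'.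
  by rewrite normr0.
- rewrite ifT; last by rewrite lte_fin.
  by rewrite -EFinD add0r ltr0_norm.
Qed.

Lemma measurable_EE x : measurable_fun setT (phi x) -> measurable (EE x).
Proof.
move=> mf.
have mg : measurable_fun setT (fun p : (Om * measurableTypeR R)%type => phi x p.1).
  exact: measurableT_comp mf measurable_fst.
have ms : measurable_fun setT (fun p : (Om * measurableTypeR R)%type => (p.2 : R)).
  exact: measurable_snd.
have mc : forall c : R, measurable_fun setT (fun p : (Om * measurableTypeR R)%type => c).
  by move=> c; exact: measurable_cst.
have mle : forall a b : (Om * measurableTypeR R)%type -> R, measurable_fun setT a -> measurable_fun setT b ->
    measurable [set p | a p <= b p].
  move=> a b ma mb.
  have := measurable_fun_ler ma mb measurableT (Y := [set true]) ltac:(by []).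
  by rewrite setTI; congr measurable; apply/seteqP; split => p /=.
have mlt : forall a b : (Om * measurableTypeR R)%type -> R, measurable_fun setT a -> measurable_fun setT b ->
    measurable [set p | a p < b p].
  move=> a b ma mb.
  have := measurable_fun_ltr ma mb measurableT (Y := [set true]) ltac:(by []).
  by rewrite setTI; congr measurable; apply/seteqP; split => p /=.
have -> : EE x = ([set p | 0 <= p.2] `&` [set p | p.2 < phi x p.1]) `|`
    ([set p | phi x p.1 <= p.2] `&` [set p | p.2 < 0]).
  apply/seteqP; split => p; rewrite /EE /Sv /=.
  - by move=> /orP[/andP[? ?]|/andP[? ?]]; [left|right].
  - by move=> [[-> ->]|[-> ->]] //; rewrite orbT.
apply: measurableU; apply: measurableI.
all: first [exact: mle | exact: mlt].
Qed.

End Meas.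

Theorem proposition8 (R : realType) (X : choiceType) (delta : {fset X} -> R) :
  is_diversity delta -> L1_embeddable delta -> measure_div_embeddable delta.
Proof.
move=> _ [d [Om [mu [phi [Hint Hdelta]]]]].
have mphi x : measurable_fun setT (phi x).
  by apply/measurable_EFinP; have /integrableP[] := Hint x.
exists _, _, (mu \x (@lebesgue_measure R))%E, (EE phi).
split.
- move=> x; split; first exact: measurable_EE.
  rewrite /= /product_measure1 /=.
  rewrite (eq_integral (fun w => `|(phi x w)%:E|)%E); last first.
    by move=> w _; rewrite /= section_E.
  by have /integrableP[_] := Hint x.
- move=> A; rewrite /measure_div /= /product_measure1 /=.
  rewrite (eq_integral (fun w => (L1_maxdiff phi A w)%:E)); last first.
    by move=> w _; rewrite /= section_D.
  by rewrite -Hdelta.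
Qed.
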